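(* Let $n\ge2$, let $\alpha_1,\dots,\alpha_n>0$, and let $A$ be the symmetric $n\times n$ real matrix with $A_{ii}=1$, $A_{i,i+1}=A_{i+1,i}=-\alpha_i$ for $1\le i\le n-1$, $A_{1,n}=A_{n,1}=-\alpha_n$, and all other entries $0$. Let $\lambda_{\min}$ be the smallest eigenvalue of $A$ and $M=\max\{\alpha_i+\alpha_{i+1}: i=1,\dots,n\}$ (indices modulo $n$). Then: (i) $\lambda_{\min}\ge1-M$; in particular $A$ is positive definite if $M<1$; (ii) $\lambda_{\min}=1-M$ if and only if $\alpha_i=\alpha_{i+2}$ for all $i$ (modulo $n$); (iii) if $n\ge4$, $\alpha_1=\dots=\alpha_{n-1}=\alpha$ and $\alpha_n=\beta$, then $\lambda_{\min}\ge\lambda$ for every real $\lambda$ with $\lambda\le1-2\alpha$, $\lambda<1-\beta$ and $\alpha^2\le(1-\alpha-\lambda)(1-\beta-\lambda)$; in particular $A$ is positive definite if $\alpha<\tfrac12$, $\beta<1$ and $\alpha^2<(1-\alpha)(1-\beta)$. *)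

(* Defs.v *)
From HB Require Import structures.
From mathcomp Require Import all_boot all_order all_algebra.
From mathcomp Require Import reals.
Set Implicit Arguments. Unset Strict Implicit. Unset Printing Implicit Defensive.
Import Order.TTheory GRing.Theory Num.Theory.
Local Open Scope ring_scope.

(* Paper index i
   corresponds to ordinal i-1; alpha_n sits on the edge (n-1,0). *)
Definition cycA (R : realType) (n : nat) (alpha : 'I_n -> R) : 'M[R]_n :=
  \matrix_(i, j) ((i == j)%:R
     - \sum_(k < n) (alpha k * ((i == k) && (j == ordS k))%:R
                     + alpha k * ((j == k) && (i == ordS k))%:R)).

(* M = max_i (alpha_i + alpha_{i+1}) (indices mod n); the alphas are positive
   so the initial value 0 is harmless. *)
Definition maxPair (R : realType) (n : nat) (alpha : 'I_n -> R) : R :=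
  \big[Num.max/0]_(i < n) (alpha i + alpha (ordS i)).

Definition is_min_eigenvalue (R : realType) (n : nat) (A : 'M[R]_n) (l : R) :=
  eigenvalue A l /\ forall m : R, eigenvalue A m -> l <= m.

Definition posdef (R : realType) (n : nat) (A : 'M[R]_n) :=
  forall v : 'rV[R]_n, v != 0 -> 0 < (v *m A *m v^T) ord0 ord0.

(* Main.v *)
From HB Require Import structures.
From mathcomp Require Import all_boot all_order all_algebra.
From mathcomp Require Import reals.
From mathcomp Require Import complex spectral polyrcf.
From mathcomp Require Import lra ring zify.
Require Import Defs.
Import Order.TTheory GRing.Theory Num.Theory.
Local Open Scope ring_scope.

Section RE.
Variable R : realType.
Local Notation C := R[i].

Lemma Re_mulr (z : C) (r : R) : complex.Re (z * r%:C%C) = complex.Re z * r.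
Proof. by case: z => a b /=; rewrite mulr0 subr0. Qed.
Lemma Im_mulr (z : C) (r : R) : complex.Im (z * r%:C%C) = complex.Im z * r.
Proof. by case: z => a b /=; rewrite mulr0 add0r. Qed.
Lemma Re_mull (z w : C) : complex.Re (z * w) = complex.Re z * complex.Re w - complex.Im z * complex.Im w.
Proof. by case: z => a b; case: w => c d. Qed.
Lemma Im_mull (z w : C) : complex.Im (z * w) = complex.Re z * complex.Im w + complex.Im z * complex.Re w.
Proof. by case: z => a b; case: w => c d /=; rewrite addrC. Qed.

Lemma Re_sum n (F : 'I_n -> C) : complex.Re (\sum_i F i) = \sum_i complex.Re (F i).
Proof. exact: (raddf_sum (complex.Re (R:=R) : Rcomplex R -> R)). Qed.
Lemma Im_sum n (F : 'I_n -> C) : complex.Im (\sum_i F i) = \sum_i complex.Im (F i).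
Proof. exact: (raddf_sum (complex.Im (R:=R) : Rcomplex R -> R)). Qed.

Lemma dot_ge0 n (u : 'rV[R]_n) : 0 <= (u *m u^T) 0 0.
Proof. rewrite !mxE; apply: sumr_ge0 => i _; rewrite mxE; by rewrite -expr2 sqr_ge0. Qed.

Lemma dot_gt0 n (u : 'rV[R]_n) : u != 0 -> 0 < (u *m u^T) 0 0.
Proof.
move=> un0; rewrite lt_def dot_ge0 andbT; apply/negP => /eqP h.
move: h; rewrite !mxE => /eqP; rewrite psumr_eq0 => [/allP h|i _]; last first.
  by rewrite mxE -expr2 sqr_ge0.
move/negP: un0; apply; apply/eqP/rowP => j; rewrite mxE.
have := h j (mem_index_enum _); rewrite mxE mulf_eq0 orbb => /eqP ->.
by [].
Qed.

Lemma bil_sym n (A : 'M[R]_n) (u w : 'rV[R]_n) : A^T = A ->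
  (u *m A *m w^T) 0 0 = (w *m A *m u^T) 0 0.
Proof.
move=> hA.
have -> : (u *m A *m w^T) 0 0 = ((u *m A *m w^T)^T) 0 0 by rewrite [RHS]mxE.
by rewrite !trmx_mul trmxK hA mulmxA.
Qed.

Lemma sym_real_eig n (A : 'M[R]_n) : (0 < n)%N -> A^T = A -> exists a, eigenvalue A a.
Proof.
move=> n0 hA.
have [z /eigenvalueP [v vA vn0]] := eigenvalue_closed (map_mx (real_complex R) A) n0.
set x := map_mx (@complex.Re R) v; set y := map_mx (@complex.Im R) v.
set p := complex.Re z; set q := complex.Im z.
have hx : x *m A = p *: x - q *: y.
  apply/rowP => j; have := congr1 (fun M : 'M[R[i]]_(1,n) => complex.Re (M 0 j)) vA.
  rewrite /= !mxE Re_sum Re_mull => <-; apply: eq_bigr => i _.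
  by rewrite !mxE Re_mulr.
have hy : y *m A = q *: x + p *: y.
  apply/rowP => j; have := congr1 (fun M : 'M[R[i]]_(1,n) => complex.Im (M 0 j)) vA.
  rewrite /= !mxE Im_sum Im_mull => h; rewrite addrC -h; apply: eq_bigr => i _.
  by rewrite !mxE Im_mulr.
have dxy : (x *m y^T) 0 0 = (y *m x^T) 0 0.
  by have := @bil_sym n 1%:M x y (trmx1 _ _); rewrite !mulmx1.
have e := @bil_sym n A x y hA; rewrite hx hy mulmxBl mulmxDl -!scalemxAl in e.
have xy0 : (x != 0) || (y != 0).
  have [x0|xn0] := eqVneq x 0; last by [].
  have [y0|yn0] := eqVneq y 0; last by [].
  move/negP: vn0; case.
  apply/eqP/rowP => j; have := congr1 (fun M : 'rV[R]_n => M 0 j) x0.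
  have := congr1 (fun M : 'rV[R]_n => M 0 j) y0; rewrite !mxE.
  by case: (v 0 j) => a b /= -> ->.
have Spos : 0 < (x *m x^T) 0 0 + (y *m y^T) 0 0.
  case/orP: xy0 => h.
    by apply: ltr_wpDr; [exact: dot_ge0 | exact: dot_gt0].
  by apply: ltr_wpDl; [exact: dot_ge0 | exact: dot_gt0].
move: e dxy Spos; set Mxy := x *m y^T; set Myx := y *m x^T; set Mxx := x *m x^T;
  set Myy := y *m y^T; rewrite !mxE => e dxy Spos.
have q0 : q = 0.
  move: Spos; set Sxx := (\sum_j _); set Syy := (\sum_j _) => Spos.
  have : q * (Sxx + Syy) = 0 by move: e; rewrite dxy -/Sxx -/Syy => e; nra.
  by move/eqP; rewrite mulf_eq0 (gt_eqF Spos) orbF => /eqP.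
exists p; apply/eigenvalueP.
case/orP: xy0 => h; [exists x | exists y] => //.
  by rewrite hx q0 scale0r subr0.
by rewrite hy q0 scale0r add0r.
Qed.
End RE.

Lemma min_eig (R : realType) n (A : 'M[R]_n) :
  (exists a, eigenvalue A a) -> exists l, is_min_eigenvalue A l.
Proof.
move=> [a ha].
have pn0 : char_poly A != 0 by rewrite monic_neq0 // char_poly_monic.
have hs : forall x, (x \in rootsR (char_poly A)) = eigenvalue A x.
  move=> x; rewrite -(roots_on_rootsR pn0) eigenvalue_root_char.
  by rewrite in_itv.
have := sorted_roots (- cauchy_bound (char_poly A)) (cauchy_bound (char_poly A)) (char_poly A).
rewrite -/(rootsR _).
move: hs; case: (rootsR (char_poly A)) => [|h t] hs srt.
  by move: ha; rewrite -hs.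
exists h; split; first by rewrite -hs mem_head.
move=> m; rewrite -hs inE => /orP [/eqP -> //|mt].
have := order_path_min (@lt_trans _ _) srt => /allP /(_ m mt) hm.
exact: ltW.
Qed.

Section Q.
Variables (R : realType) (n : nat) (alpha : 'I_n -> R).

Lemma sum_delta (F : 'I_n -> R) k : \sum_i F i * (i == k)%:R = F k.
Proof.
rewrite (bigD1 k) //= eqxx mulr1 big1 ?addr0 // => i /negbTE ->; by rewrite mulr0.
Qed.

Lemma sum_delta' (F : 'I_n -> R) k : \sum_i F i * (k == i)%:R = F k.
Proof. by under eq_bigr do rewrite eq_sym; apply: sum_delta. Qed.

Lemma natr_andb (a b : bool) : ((a && b)%:R : R) = a%:R * b%:R.
Proof. by case: a; case: b; rewrite ?mulr1 ?mulr0. Qed.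

Lemma vA_entry (v : 'rV[R]_n) j : (v *m cycA alpha) 0 j =
  v 0 j - \sum_k alpha k * (v 0 k * (j == ordS k)%:R + v 0 (ordS k) * (j == k)%:R).
Proof.
rewrite mxE; under eq_bigr do rewrite mxE mulrBr.
rewrite sumrB sum_delta; congr (_ - _).
under eq_bigr do rewrite mulr_sumr.
rewrite exchange_big /=; apply: eq_bigr => k _.
under eq_bigr do rewrite !natr_andb mulrDr mulrCA (mulrCA (v 0 _) (alpha k)) -mulrDr.
rewrite -mulr_sumr; congr (_ * _); rewrite big_split /=.
under eq_bigr do rewrite mulrA.
under [X in _ + X = _]eq_bigr do rewrite [_ * (_ == _)%:R]mulrC mulrA.
by rewrite -!mulr_suml sum_delta sum_delta [_ * (j == k)%:R]mulrC.
Qed.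

Lemma qform (v : 'rV[R]_n) : (v *m cycA alpha *m v^T) 0 0 =
  \sum_i v 0 i ^+ 2 - 2 * \sum_k alpha k * (v 0 k * v 0 (ordS k)).
Proof.
rewrite mxE; under eq_bigr do rewrite vA_entry mxE mulrBl.
rewrite sumrB; congr (_ - _).
under eq_bigr do rewrite mulr_suml.
rewrite exchange_big /= mulr_sumr; apply: eq_bigr => k _.
under eq_bigr do rewrite -mulrA mulrDl.
rewrite -mulr_sumr big_split /=.
under eq_bigr do rewrite -mulrA [_ * v 0 _]mulrC.
under [X in _ * (_ + X)]eq_bigr do rewrite -mulrA [_ * v 0 _]mulrC.
rewrite -!mulr_sumr sum_delta sum_delta [v 0 (ordS k) * v 0 k]mulrC.
by rewrite mulrCA -mulr2n mulr_natl.
Qed.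

Lemma reindexS (F : 'I_n -> R) : \sum_k F k = \sum_k F (ordS k).
Proof. exact: (reindex_inj (@ordS_inj n)). Qed.

Lemma wid (v : 'rV[R]_n) (t : 'I_n -> R) (c : R) : (forall k, t k != 0) ->
  c * \sum_i v 0 i ^+ 2 - 2 * \sum_k alpha k * (v 0 k * v 0 (ordS k)) =
  \sum_k (alpha k / t k * (t k * v 0 k - v 0 (ordS k)) ^+ 2
          + (c - alpha (ordS k) * t (ordS k) - alpha k / t k) * v 0 (ordS k) ^+ 2).
Proof.
move=> tn0.
have e : forall k, alpha k / t k * (t k * v 0 k - v 0 (ordS k)) ^+ 2
          + (c - alpha (ordS k) * t (ordS k) - alpha k / t k) * v 0 (ordS k) ^+ 2
   = (alpha k * t k * v 0 k ^+ 2 - alpha (ordS k) * t (ordS k) * v 0 (ordS k) ^+ 2)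
     + (c * v 0 (ordS k) ^+ 2 - 2 * (alpha k * (v 0 k * v 0 (ordS k)))).
  by move=> k; field; apply: tn0.
under [RHS]eq_bigr do rewrite e.
rewrite big_split /= sumrB (reindexS (fun i => alpha i * t i * v 0 i ^+ 2)) subrr add0r.
by rewrite sumrB -!mulr_sumr -(reindexS (fun i => v 0 i ^+ 2)).
Qed.

Local Notation A := (cycA alpha).
Local Notation S2 v := (\sum_i v 0 i ^+ 2).
Local Notation Q v := ((v *m A *m v^T) 0 0).

Lemma sq_ge0 (u : 'rV[R]_n) : 0 <= S2 u.
Proof. by apply: sumr_ge0 => i _; rewrite sqr_ge0. Qed.

Lemma sq_gt0 (u : 'rV[R]_n) : u != 0 -> 0 < S2 u.
Proof.
move=> un0; rewrite lt_def sq_ge0 andbT; apply/negP => /eqP h.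
move: h => /eqP; rewrite psumr_eq0 => [/allP h|i _]; last by rewrite sqr_ge0.
move/negP: un0; apply; apply/eqP/rowP => j; rewrite mxE.
by have := h j (mem_index_enum _); rewrite sqrf_eq0 => /eqP ->.
Qed.

Lemma eigQ m : eigenvalue A m -> exists2 w : 'rV_n, w != 0 & Q w = m * S2 w.
Proof.
move/eigenvalueP => [w wA wn0]; exists w => //.
rewrite wA -scalemxAl mxE; congr (_ * _); rewrite mxE; apply: eq_bigr => i _.
by rewrite mxE expr2.
Qed.

Lemma lb_eig (l : R) : (forall v : 'rV[R]_n, l * S2 v <= Q v) -> forall m, eigenvalue A m -> l <= m.
Proof.
move=> h m /eigQ [w wn0 e]; have := h w; rewrite e ler_pM2r //; exact: sq_gt0.
Qed.

Lemma lb_posdef (l : R) : 0 < l -> (forall v : 'rV[R]_n, l * S2 v <= Q v) -> posdef A.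
Proof.
move=> l0 h v vn0; apply: lt_le_trans (h v); apply: mulr_gt0 => //; exact: sq_gt0.
Qed.

Lemma wbound (t : 'I_n -> R) (c : R) : (forall k, 0 < alpha k) -> (forall k, 0 < t k) ->
  (forall k, alpha k / t k + alpha (ordS k) * t (ordS k) <= c) ->
  forall v : 'rV[R]_n, (1 - c) * S2 v <= Q v.
Proof.
move=> ha ht hc v; rewrite qform.
have := @wid v t c (fun k => lt0r_neq0 (ht k)).
have : 0 <= \sum_k (alpha k / t k * (t k * v 0 k - v 0 (ordS k)) ^+ 2
          + (c - alpha (ordS k) * t (ordS k) - alpha k / t k) * v 0 (ordS k) ^+ 2).
  apply: sumr_ge0 => k _; apply: addr_ge0.
    by apply: mulr_ge0; [apply: divr_ge0; apply: ltW|exact: sqr_ge0].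
  apply: mulr_ge0; last exact: sqr_ge0.
  by have := hc k; lra.
set X := \sum_k _; set S := \sum_i _; set P := \sum_k _ => X0 e.
rewrite mulrBl mul1r; lra.
Qed.

Lemma maxPair_ge k : alpha k + alpha (ordS k) <= maxPair alpha.
Proof. by rewrite /maxPair (bigD1 k) //= le_max lexx. Qed.

Lemma maxPair_le c : 0 <= c -> (forall k, alpha k + alpha (ordS k) <= c) -> maxPair alpha <= c.
Proof.
move=> c0 h; rewrite /maxPair; apply: (big_ind (fun x => x <= c)) => //.
by move=> x y hx hy; rewrite ge_max hx hy.
Qed.

Lemma S_const (n0 : (0 < n)%N) (f : 'I_n -> R) : (forall k, f (ordS k) = f k) ->
  forall k, f k = f (Ordinal n0).
Proof.
move=> h k; have : forall m (mn : (m < n)%N) (j : 'I_n), val j = m -> f j = f (Ordinal n0).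
  elim=> [|m IH] mn j jm; first by congr f; apply: val_inj.
  have mn' : (m < n)%N by apply: ltnW.
  have -> : j = ordS (Ordinal mn') by apply: val_inj; rewrite /= jm modn_small.
  by rewrite h (IH mn').
by move/(_ _ (ltn_ord k) k erefl).
Qed.

Lemma val_ordS (k : 'I_n) : (nat_of_ord k < n.-1)%N -> nat_of_ord (ordS k) = (nat_of_ord k).+1.
Proof. move=> h /=; rewrite modn_small //; lia. Qed.

Lemma val_ordS' (k : 'I_n) : nat_of_ord k = n.-1 -> nat_of_ord (ordS k) = 0%N.
Proof. move=> h /=; have -> : (nat_of_ord k).+1 = n by have := ltn_ord k; lia. exact: modnn. Qed.

Lemma part3 (a b l : R) : (4 <= n)%N -> (forall k, 0 < alpha k) ->
  (forall i : 'I_n, (i < n.-1)%N -> alpha i = a) ->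
  (forall i : 'I_n, nat_of_ord i = n.-1 -> alpha i = b) ->
  l <= 1 - 2 * a -> l < 1 - b -> a ^+ 2 <= (1 - a - l) * (1 - b - l) ->
  forall v : 'rV[R]_n, l * S2 v <= Q v.
Proof.
move=> n4 hpos hA hB h1 h2 h3 v.
have n0 : (0 < n.-1)%N by lia.
have a0 : 0 < a by rewrite -(hA (Ordinal (leq_trans n0 (leq_pred n)))) //.
pose c := 1 - l; pose d := c - b.
have d0 : 0 < d by rewrite /d /c; lra.
have h3' : a ^+ 2 <= (c - a) * d by rewrite /d /c; move: h3; congr (_ <= _ * _); ring.
have h1' : 2 * a <= c by rewrite /c; lra.
have q0 : a ^+ 2 / d + a <= c.
  have : a ^+ 2 / d <= c - a by rewrite ler_pdivrMr.
  lra.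
pose tn (m : nat) := if m == 0%N then d / a else if m == n.-2 then a / d else 1.
pose t (k : 'I_n) := tn (nat_of_ord k).
have tpos : forall k, 0 < t k.
  move=> k; rewrite /t /tn; case: ifP => _; first exact: divr_gt0.
  by case: ifP => _; [exact: divr_gt0 | exact: ltr01].
have e1 : a / (d / a) = a ^+ 2 / d by field; rewrite !gt_eqF.
have e2 : a * (a / d) = a ^+ 2 / d by field; rewrite !gt_eqF.
have e3 : a * (d / a) = d by field; rewrite !gt_eqF.
have e4 : a / (a / d) = d by field; rewrite !gt_eqF.
have hnode : forall k, alpha k / t k + alpha (ordS k) * t (ordS k) <= c.
  move=> k; have hk := ltn_ord k; rewrite /t /tn.
  have [kl|kl] := eqVneq (nat_of_ord k) n.-1.
    rewrite (hB k kl) val_ordS' // (hA (ordS k)) ?val_ordS' //.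
    have -> : (nat_of_ord k == 0%N) = false by apply/eqP; lia.
    have -> : (nat_of_ord k == n.-2) = false by apply/eqP; lia.
    by rewrite /= divr1 e3 /d; lra.
  have kl' : (nat_of_ord k < n.-1)%N by lia.
  rewrite (hA k kl') val_ordS // /=.
  have [k2|k2] := eqVneq (nat_of_ord k) n.-2.
    have -> : (nat_of_ord k == 0%N) = false by apply/eqP; lia.
    rewrite k2 (hB (ordS k)); last by rewrite val_ordS //; lia.
    have -> : (n.-2.+1 == n.-2) = false by apply/eqP; lia.
    by rewrite mulr1 e4 /d; lra.
  rewrite (hA (ordS k)); last by rewrite val_ordS //; lia.
  have [k3|k3] := eqVneq (nat_of_ord k) (n - 3)%N.
    have -> : (nat_of_ord k == 0%N) = false by apply/eqP; lia.
    have -> : ((nat_of_ord k).+1 == n.-2) = true by apply/eqP; lia.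
    by rewrite divr1 e2 addrC.
  have -> : ((nat_of_ord k).+1 == n.-2) = false by apply/eqP; lia.
  rewrite mulr1.
  have [k0|k0] := eqVneq (nat_of_ord k) 0%N.
    by rewrite e1.
  rewrite divr1; lra.
have := @wbound t c hpos tpos hnode v.
by have -> : 1 - c = l by rewrite /c; ring.
Qed.

Lemma part2_dir (n0 : (0 < n)%N) : (forall k, 0 < alpha k) ->
  forall w : 'rV[R]_n, w != 0 -> Q w = (1 - maxPair alpha) * S2 w ->
  forall i, alpha i = alpha (ordS (ordS i)).
Proof.
move=> hpos w wn0 e.
have := @wid w (fun _ => 1) (maxPair alpha) (fun _ => oner_neq0 _).
rewrite qform in e.
have -> : maxPair alpha * S2 w - 2 * \sum_k alpha k * (w 0 k * w 0 (ordS k)) = 0.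
  move: e; set S := \sum_i _; set P := \sum_k _ => e; lra.
move/esym/eqP; rewrite psumr_eq0 => [/allP h|k _]; last first.
  apply: addr_ge0; first by apply: mulr_ge0; [rewrite divr1 ltW|exact: sqr_ge0].
  apply: mulr_ge0; last exact: sqr_ge0.
  by have := maxPair_ge k; rewrite divr1 mulr1; lra.
have hk : forall k, alpha k * (w 0 k - w 0 (ordS k)) ^+ 2 = 0 /\
    (maxPair alpha - alpha (ordS k) - alpha k) * w 0 (ordS k) ^+ 2 = 0.
  move=> k; have := h k (mem_index_enum _); rewrite divr1 mulr1 mul1r paddr_eq0.
  - by case/andP => /eqP -> /eqP ->.
  - by apply: mulr_ge0; [rewrite ltW|exact: sqr_ge0].
  apply: mulr_ge0; last exact: sqr_ge0.
  by have := maxPair_ge k; lra.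
have wS : forall k, w 0 (ordS k) = w 0 k.
  move=> k; have [/eqP + _] := hk k; rewrite mulf_eq0 (gt_eqF (hpos k)) /=.
  by rewrite sqrf_eq0 subr_eq0 => /eqP ->.
have wc := @S_const n0 (fun k => w 0 k) wS.
have w0 : w 0 (Ordinal n0) != 0.
  apply/negP => /eqP w0; move/negP: wn0; apply; apply/eqP/rowP => j.
  by rewrite mxE wc w0.
have hM : forall k, maxPair alpha = alpha (ordS k) + alpha k.
  move=> k; have [_ /eqP] := hk k; rewrite mulf_eq0 sqrf_eq0 wc (negbTE w0) orbF.
  by move=> /eqP e2; lra.
by move=> i; have := hM i; have := hM (ordS i); lra.
Qed.

Lemma part2_conv (n0 : (0 < n)%N) : (forall k, 0 < alpha k) ->
  (forall i, alpha i = alpha (ordS (ordS i))) -> eigenvalue A (1 - maxPair alpha).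
Proof.
move=> hpos h.
pose f k := alpha k + alpha (ordS k).
have fS : forall k, f (ordS k) = f k by move=> k; rewrite /f -h addrC.
have fc := @S_const n0 f fS.
have hM : maxPair alpha = f (Ordinal n0).
  apply/le_anti/andP; split.
    apply: maxPair_le => [|k]; last by rewrite -/(f k) fc.
    by rewrite /f addr_ge0 // ltW.
  exact: maxPair_ge.
apply/eigenvalueP; exists (const_mx 1).
  apply/rowP => j; rewrite vA_entry !mxE.
  under eq_bigr do rewrite !mxE !mul1r mulrDr.
  rewrite big_split /= sum_delta'.
  have -> : \sum_k alpha k * (j == ordS k)%:R =
     \sum_k alpha (ord_pred (ordS k)) * (j == ordS k)%:R.
    by apply: eq_bigr => k _; rewrite ordSK.
  rewrite -(reindexS (fun k => alpha (ord_pred k) * (j == k)%:R)) sum_delta'.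
  have := fc (ord_pred j); rewrite /f ord_predK => ->.
  by rewrite hM mulr1.
apply/negP => /eqP/rowP/(_ (Ordinal n0)); rewrite !mxE => /eqP.
by rewrite oner_eq0.
Qed.
End Q.

Theorem mainTheorem18 (R : realType) (n : nat) (alpha : 'I_n -> R) :
  (2 <= n)%N ->
  (forall i, 0 < alpha i) ->
  exists lmin : R,
    is_min_eigenvalue (cycA alpha) lmin /\
    (* (i) *)
    (1 - maxPair alpha <= lmin /\ (maxPair alpha < 1 -> posdef (cycA alpha))) /\
    (* (ii) *)
    (lmin = 1 - maxPair alpha <-> forall i, alpha i = alpha (ordS (ordS i))) /\
    (* (iii) *)
    (forall a b : R,
       (4 <= n)%N ->
       (forall i : 'I_n, (i < n.-1)%N -> alpha i = a) ->
       (forall i : 'I_n, nat_of_ord i = n.-1 -> alpha i = b) ->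
       (forall l : R, l <= 1 - 2 * a -> l < 1 - b ->
          a ^+ 2 <= (1 - a - l) * (1 - b - l) -> l <= lmin) /\
       (a < 1 / 2 -> b < 1 -> a ^+ 2 < (1 - a) * (1 - b) -> posdef (cycA alpha))).
Proof.
move=> n2 hpos.
have n0 : (0 < n)%N by apply: leq_trans n2.
have hsym : (cycA alpha)^T = cycA alpha.
  apply/matrixP => i j; rewrite !mxE eq_sym; congr (_ - _).
  by apply: eq_bigr => k _; rewrite addrC.
have [a0 ha0] := @sym_real_eig R n (cycA alpha) n0 hsym.
have [lmin [hl1 hl2]] := @min_eig R n (cycA alpha) (ex_intro _ a0 ha0).
exists lmin; split; first by [].
have lb1 : forall v : 'rV[R]_n,
    (1 - maxPair alpha) * (\sum_i v 0 i ^+ 2) <= (v *m cycA alpha *m v^T) 0 0.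
  apply: (@wbound R n alpha (fun _ => 1) (maxPair alpha) hpos (fun _ => ltr01)).
  by move=> k; rewrite divr1 mulr1 (@maxPair_ge R n alpha).
split; [split|split].
- exact: (@lb_eig R n alpha _ lb1 lmin hl1).
- by move=> hM; apply: (@lb_posdef R n alpha _ _ lb1); rewrite subr_gt0.
- split => [e|h].
    have [w wn0 ew] := @eigQ R n alpha _ hl1.
    by apply: (@part2_dir R n alpha n0 hpos w wn0); rewrite ew e.
  apply/le_anti/andP; split; last exact: (@lb_eig R n alpha _ lb1 lmin hl1).
  exact: hl2 (@part2_conv R n alpha n0 hpos h).
move=> a b n4 hA hB; split.
  move=> l h1 h2 h3; exact: (@lb_eig R n alpha l (@part3 R n alpha a b l n4 hpos hA hB h1 h2 h3) lmin hl1).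
move=> ha hb hab.
have apos : 0 < a.
  have n1 : (0 < n.-1)%N by lia.
  by rewrite -(hA (Ordinal n0)) //.
pose f := (1 - a) * (1 - b) - a ^+ 2.
pose e := Num.min (f / 2) (Num.min (1 - 2 * a) ((1 - b) / 2)).
have f0 : 0 < f by rewrite /f subr_gt0.
have e0 : 0 < e by rewrite /e !lt_min; apply/and3P; split; lra.
have e1 : e <= f / 2 by rewrite /e ge_min lexx.
have e2 : e <= 1 - 2 * a by rewrite /e !ge_min lexx !orbT.
have e3 : e <= (1 - b) / 2 by rewrite /e !ge_min lexx !orbT.
apply: (@lb_posdef R n alpha e e0); apply: (@part3 R n alpha a b e n4 hpos hA hB) => //.
- lra.
have bpos : 0 < b.
  have nl : (n.-1 < n)%N by lia.
  by rewrite -(hB (Ordinal nl)).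
have p1 : 0 <= e * (a + b) by apply: mulr_ge0; lra.
have p2 : 0 <= e * e by apply: mulr_ge0; lra.
move: e1; rewrite /f => e1; nra.
Qed.
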